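(* Let $\mathscr T$ be a $\mathscr J$-theory, and let $\mu:V\to\mathscr T(J,J')$ and $\nu:W\to\mathscr T(K,K')$ be morphisms in $\mathscr V$ for objects $J,J',K,K'$ of $\mathscr J$. Then $\mu$ commutes with $\nu$ if and only if $\nu$ commutes with $\mu$.
   Context: $(\mathscr V,\otimes,I)$ is a closed symmetric monoidal category, $\underline{\mathscr V}$ the associated $\mathscr V$-category; everything is $\mathscr V$-enriched. A system of arities is a full sub-$\mathscr V$-category $\mathscr J\hookrightarrow\underline{\mathscr V}$ containing $I$ and closed under $\otimes$. A cotensor $[V,C]$ is an object with counit $V\to\mathscr C([V,C],C)$ inducing $\mathscr C(-,[V,C])\cong\underline{\mathscr V}(V,\mathscr C(-,C))$. A $\mathscr J$-theory is a $\mathscr V$-category $\mathscr T$ with $\mathrm{ob}\,\mathscr T=\mathrm{ob}\,\mathscr J$ and an identity-on-objects $\tau:\mathscr J^{\mathrm{op}}\to\mathscr T$ preserving cotensors by objects of $\mathscr J$. In $\mathscr T$, $J\otimes K$ is a cotensor of $K$ by $J$ with counit $J\xrightarrow{\mathrm{Coev}}\underline{\mathscr V}(K,J\otimes K)=\mathscr J^{\mathrm{op}}(J\otimes K,K)\xrightarrow{\tau}\mathscr T(J\otimes K,K)$, and $K\otimes J$ is a cotensor of $K$ by $J$ with counit $J\xrightarrow{\mathrm{Coev}'}\underline{\mathscr V}(K,K\otimes J)\xrightarrow{\tau}\mathscr T(K\otimes J,K)$ ($\mathrm{Coev}'$ = coevaluation composed with the symmetry); these induce $\mathscr V$-functors $[J,-]_\ell,[J,-]_r:\mathscr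 T\to\mathscr T$ ($K\mapsto J\otimes K$, $K\mapsto K\otimes J$), the unique ones with these object maps making the counits $\mathscr V$-natural. The first and second Kronecker products $\mathsf k,\tilde{\mathsf k}:\mathscr T(J,J')\otimes\mathscr T(K,K')\to\mathscr T(J\otimes K,J'\otimes K')$ are the composites $\mathscr T(J,J')\otimes\mathscr T(K,K')\xrightarrow{[K,-]_r\otimes[J',-]_\ell}\mathscr T(J\otimes K,J'\otimes K)\otimes\mathscr T(J'\otimes K,J'\otimes K')\xrightarrow{\text{comp}}\mathscr T(J\otimes K,J'\otimes K')$ and $\mathscr T(J,J')\otimes\mathscr T(K,K')\xrightarrow{[K',-]_r\otimes[J,-]_\ell}\mathscr T(J\otimes K',J'\otimes K')\otimes\mathscr T(J\otimes K,J\otimes K')\xrightarrow{\text{comp}}\mathscr T(J\otimes K,J'\otimes K')$. $\mu$ commutes with $\nu$ if $\mathsf k\cdot(\mu\otimes\nu)=\tilde{\mathsf k}\cdot(\mu\otimes\nu):V\otimes W\to\mathscr T(J\otimes K,J'\otimes K')$ (and $\nu$ commutes with $\mu$ means the analogous equation for $\nu\otimes\mu:W\otimes V\to\mathscr T(K\otimes J,K'\otimes J')$). *)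

(* Defs.v *)
Record Cat : Type := {
  ob :> Type;
  hom : ob -> ob -> Type;
  comp : forall a b c : ob, hom b c -> hom a b -> hom a c;
  idm : forall a : ob, hom a a;
  comp_idl : forall a b (f : hom a b), comp a b b (idm b) f = f;
  comp_idr : forall a b (f : hom a b), comp a a b f (idm a) = f;
  comp_assoc : forall a b c d (f : hom c d) (g : hom b c) (h : hom a b),
      comp a c d f (comp a b c g h) = comp a b d (comp b c d f g) h }.

Arguments hom {_} _ _.
Arguments comp {_ _ _ _} _ _.
Arguments idm {_} _.

Notation "g ∘ f" := (comp g f) (at level 40, left associativity).

Record SMCC (C : Cat) : Type := {
  tens : C -> C -> C;
  tensm : forall a a' b b' : C, hom a a' -> hom b b' -> hom (tens a b) (tens a' b');
  tensm_id : forall a b : C, tensm _ _ _ _ (idm a) (idm b) = idm (tens a b);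
  tensm_comp : forall (a a' a'' b b' b'' : C) (f : hom a' a'') (f' : hom a a')
      (g : hom b' b'') (g' : hom b b'),
      tensm _ _ _ _ (f ∘ f') (g ∘ g') = tensm _ _ _ _ f g ∘ tensm _ _ _ _ f' g';
  unit : C;
  alpha : forall a b c : C, hom (tens (tens a b) c) (tens a (tens b c));
  alpha_inv : forall a b c : C, hom (tens a (tens b c)) (tens (tens a b) c);
  alpha_inv_l : forall a b c, alpha_inv a b c ∘ alpha a b c = idm _;
  alpha_inv_r : forall a b c, alpha a b c ∘ alpha_inv a b c = idm _;
  alpha_nat : forall a a' b b' c c' (f : hom a a') (g : hom b b') (h : hom c c'),
      alpha a' b' c' ∘ tensm _ _ _ _ (tensm _ _ _ _ f g) h
      = tensm _ _ _ _ f (tensm _ _ _ _ g h) ∘ alpha a b c;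
  lam : forall a : C, hom (tens unit a) a;
  lam_inv : forall a : C, hom a (tens unit a);
  lam_inv_l : forall a, lam_inv a ∘ lam a = idm _;
  lam_inv_r : forall a, lam a ∘ lam_inv a = idm _;
  lam_nat : forall a a' (f : hom a a'), lam a' ∘ tensm _ _ _ _ (idm unit) f = f ∘ lam a;
  rho : forall a : C, hom (tens a unit) a;
  rho_inv : forall a : C, hom a (tens a unit);
  rho_inv_l : forall a, rho_inv a ∘ rho a = idm _;
  rho_inv_r : forall a, rho a ∘ rho_inv a = idm _;
  rho_nat : forall a a' (f : hom a a'), rho a' ∘ tensm _ _ _ _ f (idm unit) = f ∘ rho a;
  sigma : forall a b : C, hom (tens a b) (tens b a);
  sigma_nat : forall a a' b b' (f : hom a a') (g : hom b b'),
      sigma a' b' ∘ tensm _ _ _ _ f g = tensm _ _ _ _ g f ∘ sigma a b;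
  sigma_sigma : forall a b, sigma b a ∘ sigma a b = idm _;
  pentagon : forall a b c d : C,
      alpha a b (tens c d) ∘ alpha (tens a b) c d
      = tensm _ _ _ _ (idm a) (alpha b c d) ∘ alpha a (tens b c) d
        ∘ tensm _ _ _ _ (alpha a b c) (idm d);
  triangle : forall a b : C,
      tensm _ _ _ _ (idm a) (lam b) ∘ alpha a unit b = tensm _ _ _ _ (rho a) (idm b);
  hexagon : forall a b c : C,
      alpha b c a ∘ sigma a (tens b c) ∘ alpha a b c
      = tensm _ _ _ _ (idm b) (sigma a c) ∘ alpha b a c ∘ tensm _ _ _ _ (sigma a b) (idm c);
  ihom : C -> C -> C;
  ev : forall a b : C, hom (tens (ihom a b) a) b;
  curry : forall a b c : C, hom (tens c a) b -> hom c (ihom a b);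
  ev_curry : forall a b c (f : hom (tens c a) b),
      ev a b ∘ tensm _ _ _ _ (curry a b c f) (idm a) = f;
  curry_ev : forall a b c (g : hom c (ihom a b)),
      curry a b c (ev a b ∘ tensm _ _ _ _ g (idm a)) = g }.

Arguments tens {C} M _ _ : rename.
Arguments tensm {C} M {a a' b b'} _ _ : rename.
Arguments unit {C} M : rename.
Arguments alpha {C} M a b c : rename.
Arguments lam {C} M a : rename.
Arguments rho {C} M a : rename.
Arguments sigma {C} M a b : rename.
Arguments ihom {C} M _ _ : rename.
Arguments ev {C} M a b : rename.
Arguments curry {C} M {a b c} _ : rename.

Section Enriched.
Context {C : Cat} (M : SMCC C).

Local Notation "a ⊗ b" := (tens M a b) (at level 30, right associativity).
Local Notation "f ⊗m g" := (tensm M f g) (at level 30, right associativity).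

Definition Vcomp (a b c : C) : hom (ihom M b c ⊗ ihom M a b) (ihom M a c) :=
  curry M (ev M b c ∘ (idm _ ⊗m ev M a b) ∘ alpha M _ _ _).

Definition Vid (a : C) : hom (unit M) (ihom M a a) := curry M (lam M a).

(** Coevaluation  a -> [b, a ⊗ b]  and  Coev' = coevaluation followed by
    [b, symmetry] : a -> [b, b ⊗ a] (which is curry of the symmetry). *)
Definition Coev (a b : C) : hom a (ihom M b (a ⊗ b)) := curry M (idm (a ⊗ b)).
Definition Coev' (a b : C) : hom a (ihom M b (b ⊗ a)) := curry M (sigma M a b).

Record VCat (O : Type) : Type := {
  vhom : O -> O -> C;
  vcomp : forall a b c : O, hom (vhom b c ⊗ vhom a b) (vhom a c);
  vid : forall a : O, hom (unit M) (vhom a a);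
  vassoc : forall a b c d : O,
      vcomp a c d ∘ (idm (vhom c d) ⊗m vcomp a b c) ∘ alpha M _ _ _
      = vcomp a b d ∘ (vcomp b c d ⊗m idm (vhom a b));
  vunit_l : forall a b : O, vcomp a b b ∘ (vid b ⊗m idm (vhom a b)) = lam M _;
  vunit_r : forall a b : O, vcomp a a b ∘ (idm (vhom a b) ⊗m vid a) = rho M _ }.

Arguments vhom {O} _ _ _.
Arguments vcomp {O} _ _ _ _.
Arguments vid {O} _ _.

(** Given hom-objects H and composition cmp, the object X with
    counit e : v -> H(X,K) is a cotensor [v, K] iff for every Y the induced
    map  H(Y,X) -> [v, H(Y,K)]  is an isomorphism in V. *)
Definition cotensor_map {O : Type} (H : O -> O -> C)
    (cmp : forall a b c : O, hom (H b c ⊗ H a b) (H a c))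
    {X K : O} {v : C} (e : hom v (H X K)) (Y : O) : hom (H Y X) (ihom M v (H Y K)) :=
  curry M (cmp Y X K ∘ sigma M _ _ ∘ (idm (H Y X) ⊗m e)).

Definition is_cotensor {O : Type} (H : O -> O -> C)
    (cmp : forall a b c : O, hom (H b c ⊗ H a b) (H a c))
    {X K : O} {v : C} (e : hom v (H X K)) : Prop :=
  forall Y : O, exists psi : hom (ihom M v (H Y K)) (H Y X),
    psi ∘ cotensor_map H cmp e Y = idm _ /\ cotensor_map H cmp e Y ∘ psi = idm _.

(** ** Systems of arities: full sub-V-category of underline-V given by a class
    of objects containing I and closed under ⊗. *)
Record Arities : Type := {
  arity : C -> Prop;
  arity_unit : arity (unit M);
  arity_tens : forall a b : C, arity a -> arity b -> arity (a ⊗ b) }.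

Arguments arity_tens _ {a b} _ _.

Section Theories.
Variable P : Arities.

Definition JO : Type := { a : C | arity P a }.
Definition JV (A : JO) : C := proj1_sig A.

Definition Jtens (A B : JO) : JO :=
  exist _ (JV A ⊗ JV B) (arity_tens P (proj2_sig A) (proj2_sig B)).

(** The V-category J^op : J^op(A,B) = J(B,A) = [B,A], composition is that of
    underline-V precomposed with the symmetry. *)
Definition Jhom (A B : JO) : C := ihom M (JV B) (JV A).
Definition Jcomp (A B D : JO) : hom (Jhom B D ⊗ Jhom A B) (Jhom A D) :=
  Vcomp (JV D) (JV B) (JV A) ∘ sigma M _ _.
Definition Jid (A : JO) : hom (unit M) (Jhom A A) := Vid (JV A).

(** ** J-theories: a V-category T with ob T = ob J and an identity-on-objects
    V-functor tau : J^op -> T preserving cotensors by objects of J. *)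
Record Theory : Type := {
  th : VCat JO;
  tau : forall A B : JO, hom (Jhom A B) (vhom th A B);
  tau_comp : forall A B D : JO,
      tau A D ∘ Jcomp A B D = vcomp th A B D ∘ (tau B D ⊗m tau A B);
  tau_id : forall A : JO, tau A A ∘ Jid A = vid th A;
  tau_cotensor : forall (A X K : JO) (e : hom (JV A) (Jhom X K)),
      is_cotensor Jhom Jcomp e -> is_cotensor (vhom th) (vcomp th) (tau X K ∘ e) }.

Arguments tau _ _ _ : clear implicits.

Section InTheory.
Variable T : Theory.

Local Notation "T( A , B )" := (vhom (th T) A B).

(** Counits of the cotensors  J ⊗ K = [J, K]  and  K ⊗ J = [J, K]  in T. *)
Definition counit_l (A K : JO) : hom (JV A) T(Jtens A K, K) :=
  tau T (Jtens A K) K ∘ Coev (JV A) (JV K).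
Definition counit_r (A K : JO) : hom (JV A) T(Jtens K A, K) :=
  tau T (Jtens K A) K ∘ Coev' (JV A) (JV K).

(** Hom-actions of [A,-]_l (K |-> A ⊗ K) and [A,-]_r (K |-> K ⊗ A):
    they are characterized (uniquely, by the cotensor property) as the maps
    making the counits V-natural:  f ∘ e_K = e_K' ∘ [A,f]  internally. *)
Definition is_left_action
    (F : forall A K K' : JO, hom T(K, K') T(Jtens A K, Jtens A K')) : Prop :=
  forall A K K' : JO,
    vcomp (th T) (Jtens A K) K K' ∘ (idm T(K, K') ⊗m counit_l A K)
    = vcomp (th T) (Jtens A K) (Jtens A K') K' ∘ (counit_l A K' ⊗m F A K K')
      ∘ sigma M _ _.

Definition is_right_action
    (F : forall A K K' : JO, hom T(K, K') T(Jtens K A, Jtens K' A)) : Prop :=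
  forall A K K' : JO,
    vcomp (th T) (Jtens K A) K K' ∘ (idm T(K, K') ⊗m counit_r A K)
    = vcomp (th T) (Jtens K A) (Jtens K' A) K' ∘ (counit_r A K' ⊗m F A K K')
      ∘ sigma M _ _.

Definition kron1
    (Fl : forall A K K' : JO, hom T(K, K') T(Jtens A K, Jtens A K'))
    (Fr : forall A K K' : JO, hom T(K, K') T(Jtens K A, Jtens K' A))
    (J J' K K' : JO) :
    hom (T(J, J') ⊗ T(K, K')) T(Jtens J K, Jtens J' K') :=
  vcomp (th T) (Jtens J K) (Jtens J' K) (Jtens J' K') ∘ sigma M _ _
  ∘ (Fr K J J' ⊗m Fl J' K K').

Definition kron2
    (Fl : forall A K K' : JO, hom T(K, K') T(Jtens A K, Jtens A K'))
    (Fr : forall A K K' : JO, hom T(K, K') T(Jtens K A, Jtens K' A))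
    (J J' K K' : JO) :
    hom (T(J, J') ⊗ T(K, K')) T(Jtens J K, Jtens J' K') :=
  vcomp (th T) (Jtens J K) (Jtens J K') (Jtens J' K')
  ∘ (Fr K' J J' ⊗m Fl J K K').

(** mu commutes with nu :  k · (mu ⊗ nu) = k~ · (mu ⊗ nu), where k, k~ are
    built from THE functors [-,-]_l, [-,-]_r (quantifying over all families
    satisfying their defining property; such families exist and are unique
    in a J-theory). *)
Definition commutes_with {V W : C} {J J' K K' : JO}
    (mu : hom V T(J, J')) (nu : hom W T(K, K')) : Prop :=
  forall Fl Fr, is_left_action Fl -> is_right_action Fr ->
    kron1 Fl Fr J J' K K' ∘ (mu ⊗m nu) = kron2 Fl Fr J J' K K' ∘ (mu ⊗m nu).

End InTheory.
End Theories.
End Enriched.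

Arguments Theory {C M} P.
Arguments JO {C M} P.
Arguments vhom {C M O} v _ _.
Arguments th {C M P} t.
Arguments commutes_with {C M P} T {V W J J' K K'} mu nu.

(* Main.v *)
Require Import Defs.

Section Coh.
Context {C : Cat} (M : SMCC C).
Local Notation "a ⊠ b" := (tens M a b) (at level 30, right associativity).
Local Notation "f ⊗ g" := (tensm M f g) (at level 30, right associativity).
Local Notation I := (unit M).

Lemma assoc {a b c d : C} (f:hom c d) (g : hom b c) (h : hom a b) : f ∘ (g ∘ h) = f ∘ g ∘ h.
Proof. apply comp_assoc. Qed.
Lemma idl {a b : C} (f : hom a b) : idm b ∘ f = f. Proof. apply comp_idl. Qed.
Lemma idr {a b : C} (f : hom a b) : f ∘ idm a = f. Proof. apply comp_idr. Qed.
Lemma rw2 {b c d : C} {f : hom c d} {g : hom b c} {k : hom b d} :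
  f ∘ g = k -> forall e (h : hom d e), h ∘ f ∘ g = h ∘ k.
Proof. intros E e h. rewrite <- assoc, E. reflexivity. Qed.
Lemma rw3 {a b c d : C} {f : hom c d} {g : hom b c} {g' : hom a b} {k : hom a d} :
  f ∘ g ∘ g' = k -> forall e (h : hom d e), h ∘ f ∘ g ∘ g' = h ∘ k.
Proof. intros E e h. rewrite <- !assoc, (assoc f), E. reflexivity. Qed.

Lemma rw4 {a0 a b c d : C} {f : hom c d} {g : hom b c} {g' : hom a b} {g'' : hom a0 a} {k : hom a0 d} :
  f ∘ g ∘ g' ∘ g'' = k -> forall e (h : hom d e), h ∘ f ∘ g ∘ g' ∘ g'' = h ∘ k.
Proof. intros E e h. rewrite <- !assoc, (assoc f), (assoc (f ∘ g)), E. reflexivity. Qed.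
Ltac norm := repeat rewrite assoc.
Tactic Notation "rw" uconstr(E) := first [rewrite E | erewrite (rw2 E) | erewrite (rw3 E) | erewrite (rw4 E)]; norm.

Lemma tc {a a' a'' b b' b'' : C} (f : hom a' a'') (f' : hom a a') (g : hom b' b'') (g' : hom b b') :
  (f ∘ f') ⊗ (g ∘ g') = (f ⊗ g) ∘ (f' ⊗ g').
Proof. apply tensm_comp. Qed.
Lemma tid (a b : C) : idm a ⊗ idm b = idm (a ⊠ b). Proof. apply tensm_id. Qed.
Lemma tcl {a a' a'' : C} (c : C) (f : hom a' a'') (f' : hom a a') :
  (f ∘ f') ⊗ idm c = (f ⊗ idm c) ∘ (f' ⊗ idm c).
Proof. rewrite <- tc, idl. reflexivity. Qed.
Lemma tcr {a a' a'' : C} (c : C) (f : hom a' a'') (f' : hom a a') :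
  idm c ⊗ (f ∘ f') = (idm c ⊗ f) ∘ (idm c ⊗ f').
Proof. rewrite <- tc, idl. reflexivity. Qed.
Lemma tsplit {a a' b b' : C} (f : hom a a') (g : hom b b') : f ⊗ g = (f ⊗ idm b') ∘ (idm a ⊗ g).
Proof. rewrite <- tc, idl, idr. reflexivity. Qed.
Lemma tsplit' {a a' b b' : C} (f : hom a a') (g : hom b b') : f ⊗ g = (idm a' ⊗ g) ∘ (f ⊗ idm b).
Proof. rewrite <- tc, idl, idr. reflexivity. Qed.

Lemma cancel_r {a b c : C} (i : hom a b) (j : hom b a) (f g : hom b c) :
  i ∘ j = idm b -> f ∘ i = g ∘ i -> f = g.
Proof. intros E H. rewrite <- (idr f), <- (idr g), <- E, !assoc, H. reflexivity. Qed.
Lemma cancel_l {a b c : C} (i : hom b c) (j : hom c b) (f g : hom a b) :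
  j ∘ i = idm b -> i ∘ f = i ∘ g -> f = g.
Proof. intros E H. rewrite <- (idl f), <- (idl g), <- E, <- !assoc, H. reflexivity. Qed.

Lemma faith_lam {a b : C} (f g : hom a b) : idm I ⊗ f = idm I ⊗ g -> f = g.
Proof.
  intro H. rewrite <- (idr f), <- (idr g), <- (lam_inv_r C M a), !assoc,
    <- !(lam_nat C M), H. reflexivity.
Qed.
Lemma faith_rho {a b : C} (f g : hom a b) : f ⊗ idm I = g ⊗ idm I -> f = g.
Proof.
  intro H. rewrite <- (idr f), <- (idr g), <- (rho_inv_r C M a), !assoc,
    <- !(rho_nat C M), H. reflexivity.
Qed.

Lemma K1 (a b : C) : lam M (a ⊠ b) ∘ alpha M I a b = lam M a ⊗ idm b.
Proof.
  apply faith_lam.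
  apply (cancel_r (alpha M I (I ⊠ a) b ∘ (alpha M I I a ⊗ idm b))
                  ((alpha_inv C M I I a ⊗ idm b) ∘ alpha_inv C M I (I ⊠ a) b)).
  { norm. rw (eq_sym (tcl b (alpha M I I a) (alpha_inv C M I I a))).
    rewrite (alpha_inv_r C M), tid, idr, (alpha_inv_r C M). reflexivity. }
  rewrite tcr. norm.
  rw (eq_sym (pentagon C M I I a b)).
  rewrite (triangle C M I (a ⊠ b)).
  rewrite <- (tid a b), <- (alpha_nat C M).
  rewrite <- (triangle C M I a), tcl. norm.
  rewrite (alpha_nat C M). reflexivity.
Qed.

Lemma K2 (a b : C) : (idm a ⊗ rho M b) ∘ alpha M a b I = rho M (a ⊠ b).
Proof.
  apply faith_rho.
  apply (cancel_l (alpha M a b I) (alpha_inv C M a b I)); [apply alpha_inv_l|].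
  rewrite <- (triangle C M (a ⊠ b) I).
  rewrite <- (tid a b). norm.
  rewrite (alpha_nat C M).
  rw (pentagon C M a b I I).
  rewrite <- tcr. rewrite (triangle C M b I).
  rewrite <- (alpha_nat C M). rewrite <- assoc, <- tcl. reflexivity.
Qed.

Lemma lam_tens (a : C) : lam M (I ⊠ a) = idm I ⊗ lam M a.
Proof.
  apply (cancel_l (lam M a) (lam_inv C M a)); [apply lam_inv_l|].
  symmetry. apply lam_nat.
Qed.

Lemma K3 : lam M I = rho M I.
Proof.
  apply faith_rho. rewrite <- K1, <- (triangle C M I I), lam_tens. reflexivity.
Qed.

Lemma K4 (a : C) : lam M a ∘ sigma M a I = rho M a.
Proof.
  apply faith_rho.
  apply (cancel_l (sigma M a I) (sigma M I a)); [apply sigma_sigma|].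
  assert (H := f_equal (fun h => lam M (I ⊠ a) ∘ h) (hexagon C M a I I)).
  simpl in H. repeat rewrite assoc in H. norm.
  rewrite (K1 I a) in H. rewrite <- (sigma_nat C M) in H.
  repeat rewrite assoc in H. rewrite (rw2 (triangle C M a I)) in H.
  rewrite (lam_nat C M) in H. repeat rewrite assoc in H. rewrite (rw2 (K1 a I)) in H.
  rewrite <- assoc, <- tcl in H. symmetry. exact H.
Qed.

Lemma sigmaII : sigma M I I = idm (I ⊠ I).
Proof.
  apply (cancel_l (lam M I) (lam_inv C M I)); [apply lam_inv_l|].
  rewrite K4, idr, K3. reflexivity.
Qed.



Lemma tswap {a a' b b' : C} (f : hom a a') (g : hom b b') :
  (idm a' ⊗ g) ∘ (f ⊗ idm b) = (f ⊗ idm b') ∘ (idm a ⊗ g).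
Proof. rewrite <- tsplit, <- tsplit'. reflexivity. Qed.

Lemma li_nat {a b : C} (f : hom a b) : lam_inv C M b ∘ f = (idm I ⊗ f) ∘ lam_inv C M a.
Proof.
  apply (cancel_l (lam M b) (lam_inv C M b)); [apply lam_inv_l|].
  norm. rewrite (lam_inv_r C M), idl, (lam_nat C M), <- assoc, (lam_inv_r C M), idr. reflexivity.
Qed.
Lemma ri_nat {a b : C} (f : hom a b) : rho_inv C M b ∘ f = (f ⊗ idm I) ∘ rho_inv C M a.
Proof.
  apply (cancel_l (rho M b) (rho_inv C M b)); [apply rho_inv_l|].
  norm. rewrite (rho_inv_r C M), idl, (rho_nat C M), <- assoc, (rho_inv_r C M), idr. reflexivity.
Qed.

Lemma Ki1 (a b : C) : alpha M I a b ∘ (lam_inv C M a ⊗ idm b) = lam_inv C M (a ⊠ b).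
Proof.
  apply (cancel_l (lam M (a ⊠ b)) (lam_inv C M (a ⊠ b))); [apply lam_inv_l|].
  norm. rewrite K1, <- tcl, (lam_inv_r C M), tid, (lam_inv_r C M). reflexivity.
Qed.
Lemma Ki2 (a b : C) : alpha M a b I ∘ rho_inv C M (a ⊠ b) = idm a ⊗ rho_inv C M b.
Proof.
  apply (cancel_l (idm a ⊗ rho M b) (idm a ⊗ rho_inv C M b)).
  { rewrite <- tcr, (rho_inv_l C M), tid. reflexivity. }
  norm. rewrite K2, (rho_inv_r C M), <- tcr, (rho_inv_r C M), tid. reflexivity.
Qed.
Lemma Ti (a b : C) : alpha M a I b ∘ (rho_inv C M a ⊗ idm b) = idm a ⊗ lam_inv C M b.
Proof.
  apply (cancel_l (idm a ⊗ lam M b) (idm a ⊗ lam_inv C M b)).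
  { rewrite <- tcr, (lam_inv_l C M), tid. reflexivity. }
  norm. rewrite (triangle C M), <- tcl, (rho_inv_r C M), <- tcr, (lam_inv_r C M), !tid. reflexivity.
Qed.
Lemma K3i : lam_inv C M I = rho_inv C M I.
Proof.
  apply (cancel_l (lam M I) (lam_inv C M I)); [apply lam_inv_l|].
  rewrite (lam_inv_r C M), K3, (rho_inv_r C M). reflexivity.
Qed.

Section VC.
Context {O : Type} (H : VCat M O).
Local Notation hh a b := (vhom H a b).
Local Notation vc a b c := (vcomp M O H a b c).

Definition post {a b c : O} (p : hom I (hh b c)) : hom (hh a b) (hh a c) :=
  vc a b c ∘ (p ⊗ idm (hh a b)) ∘ lam_inv C M (hh a b).
Definition pre {a b c : O} (q : hom I (hh a b)) : hom (hh b c) (hh a c) :=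
  vc a b c ∘ (idm (hh b c) ⊗ q) ∘ rho_inv C M (hh b c).
Definition pcomp {a b c : O} (p : hom I (hh b c)) (q : hom I (hh a b)) : hom I (hh a c) :=
  vc a b c ∘ (p ⊗ q) ∘ rho_inv C M I.

Lemma L1 {a b c d : O} (p : hom I (hh c d)) :
  vc a b d ∘ (post p ⊗ idm (hh a b)) = post p ∘ vc a b c.
Proof.
  unfold post. rewrite !tcl. norm.
  rewrite <- (vassoc M O H).
  rw (alpha_nat C M _ _ _ _ _ _ _ _ _). rewrite tid. rw (Ki1 (hh b c) (hh a b)).
  rw (li_nat _). rw (tswap p (vc a b c)). reflexivity.
Qed.

Lemma L2 {a' a b c : O} (q : hom I (hh a' a)) :
  vc a' b c ∘ (idm (hh b c) ⊗ pre q) = pre q ∘ vc a b c.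
Proof.
  unfold pre. rewrite !tcr. norm.
  rewrite <- (Ki2 (hh b c) (hh a b)). norm.
  rw (eq_sym (alpha_nat C M _ _ _ _ _ _ (idm (hh b c)) (idm (hh a b)) q)).
  rw (vassoc M O H a' a b c).
  rewrite tid. rw (eq_sym (tswap (vc a b c) q)).
  rw (eq_sym (ri_nat (vc a b c))). reflexivity.
Qed.

Lemma L3 {a b b' c : O} (q : hom I (hh b b')) :
  vc a b c ∘ (pre q ⊗ idm (hh a b)) = vc a b' c ∘ (idm (hh b' c) ⊗ post q).
Proof.
  unfold pre, post. rewrite !tcl, !tcr. norm.
  rewrite <- (vassoc M O H). rw (alpha_nat C M _ _ _ _ _ _ _ _ _).
  rw (Ti (hh b' c) (hh a b)). reflexivity.
Qed.

Lemma L4 {a b c d : O} (p1 : hom I (hh c d)) (p2 : hom I (hh b c)) :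
  @post a c d p1 ∘ post p2 = post (pcomp p1 p2).
Proof.
  unfold post, pcomp. norm.
  rw (li_nat (vc a b c)).
  rw (eq_sym (tswap p1 (vc a b c))).
  rw (li_nat (p2 ⊗ idm (hh a b))).
  rw (li_nat (lam_inv C M (hh a b))).
  rw (eq_sym (Ti I (hh a b))).
  rw (eq_sym (tsplit p1 (p2 ⊗ idm (hh a b)))).
  rw (eq_sym (alpha_nat C M _ _ _ _ _ _ p1 p2 (idm (hh a b)))).
  rw (vassoc M O H a b c d).
  rewrite !tcl. norm. reflexivity.
Qed.

Lemma L4' {a' a b c : O} (q1 : hom I (hh a' a)) (q2 : hom I (hh a b)) :
  @pre a' a c q1 ∘ @pre a b c q2 = pre (pcomp q2 q1).
Proof.
  unfold pre, pcomp. norm.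
  rw (ri_nat (vc a b c)).
  rw (tswap (vc a b c) q1).
  rw (eq_sym (vassoc M O H a' a b c)).
  rw (ri_nat (idm (hh b c) ⊗ q2)).
  rw (eq_sym (tsplit' (idm (hh b c) ⊗ q2) q1)).
  rw (alpha_nat C M _ _ _ _ _ _ (idm (hh b c)) q2 q1).
  rw (ri_nat (rho_inv C M (hh b c))).
  rw (Ti (hh b c) I).
  rewrite K3i, !tcr. norm. reflexivity.
Qed.

Lemma L4c {a b c d : O} (p : hom I (hh c d)) (q : hom I (hh a b)) :
  @post a c d p ∘ @pre a b c q = @pre a b d q ∘ @post b c d p.
Proof.
  unfold pre, post. norm.
  rw (li_nat (vc a b c)).
  rw (eq_sym (tswap p (vc a b c))).
  rw (li_nat (idm (hh b c) ⊗ q)).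
  rw (li_nat (rho_inv C M (hh b c))).
  rw (ri_nat (vc b c d)).
  rw (tswap (vc b c d) q).
  rw (eq_sym (vassoc M O H a b c d)).
  rw (ri_nat (p ⊗ idm (hh b c))).
  rw (tswap (p ⊗ idm (hh b c)) q).
  rw (alpha_nat C M _ _ _ _ _ _ p (idm (hh b c)) (idm (hh a b))).
  rewrite tid.
  rewrite <- (tid I (hh b c)).
  rw (alpha_nat C M _ _ _ _ _ _ (idm I) (idm (hh b c)) q).
  rw (ri_nat (lam_inv C M (hh b c))).
  rw (Ki1 (hh b c) I).
  rw (li_nat (rho_inv C M (hh b c))).
  reflexivity.
Qed.

Lemma post_id {a b : O} : @post a b b (vid M O H b) = idm (hh a b).
Proof. unfold post. rewrite (vunit_l M O H), (lam_inv_r C M). reflexivity. Qed.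
Lemma pre_id {a b : O} : @pre a a b (vid M O H a) = idm (hh a b).
Proof. unfold pre. rewrite (vunit_r M O H), (rho_inv_r C M). reflexivity. Qed.

Lemma MID {X Y : C} {a' a b b' c c' : O}
  (p1 : hom I (hh c c')) (q1 : hom I (hh b' b)) (F : hom X (hh b c))
  (p2 : hom I (hh b b')) (q2 : hom I (hh a' a)) (G : hom Y (hh a b)) :
  pcomp q1 p2 = vid M O H b ->
  vc a' b' c' ∘ ((post p1 ∘ pre q1 ∘ F) ⊗ (post p2 ∘ pre q2 ∘ G))
  = post p1 ∘ pre q2 ∘ vc a b c ∘ (F ⊗ G).
Proof.
  intro Hv. rewrite tc. rewrite (tsplit (post p1 ∘ pre q1)), tcl, tcr. norm.
  rw (L1 p1). rw (L3 q1). rw (eq_sym (tcr _ (post q1) (post p2))).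
  rewrite L4, Hv, post_id, tid, idr. rw (L2 q2). reflexivity.
Qed.

Lemma conj_inv {a a' b b' : O} (pa : hom I (hh b' a')) (qb : hom I (hh a b))
  (pc : hom I (hh a' b')) (qd : hom I (hh b a)) :
  pcomp pa pc = vid M O H a' -> pcomp qd qb = vid M O H a ->
  post pa ∘ pre qb ∘ (post pc ∘ pre qd) = idm (hh a a').
Proof.
  intros H1 H2. norm. rw (eq_sym (L4c pc qb)). rewrite L4, H1, post_id, idl.
  rewrite L4', H2, pre_id. reflexivity.
Qed.
End VC.

Lemma curry_nat {a b c c' : C} (f : hom (c ⊠ a) b) (g : hom c' c) :
  curry M f ∘ g = curry M (f ∘ (g ⊗ idm a)).
Proof.
  rewrite <- (curry_ev C M a b c' (curry M f ∘ g)). f_equal.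
  rewrite tcl. norm. rewrite (ev_curry C M). reflexivity.
Qed.
Lemma curry_inj {a b c : C} (f g : hom (c ⊠ a) b) : curry M f = curry M g -> f = g.
Proof. intro E. rewrite <- (ev_curry C M a b c f), <- (ev_curry C M a b c g), E. reflexivity. Qed.

Definition cs (x y : C) : hom I (ihom M (x ⊠ y) (y ⊠ x)) := curry M (sigma M x y ∘ lam M (x ⊠ y)).

Lemma Vswap (x y : C) :
  Vcomp M (x ⊠ y) (y ⊠ x) (x ⊠ y) ∘ sigma M _ _ ∘ (cs x y ⊗ cs y x) ∘ rho_inv C M I = Vid M (x ⊠ y).
Proof.
  unfold Vcomp, Vid. rewrite !curry_nat. f_equal.
  rw (eq_sym (tcl _ (sigma M _ _) (cs x y ⊗ cs y x))). rewrite (sigma_nat C M), sigmaII, idr.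
  rw (alpha_nat C M _ _ _ _ _ _ _ _ _).
  rewrite (tsplit (cs y x) (cs x y ⊗ idm (x ⊠ y))). norm.
  rw (tswap (cs y x) (ev M _ _)).
  rw (eq_sym (tcr _ (ev M _ _) (cs x y ⊗ idm (x ⊠ y)))).
  unfold cs. rewrite !(ev_curry C M).
  rewrite tcr. norm. rw (lam_nat C M _ _ (sigma M x y)). rewrite (sigma_sigma C M), idl.
  rw (Ti I (x ⊠ y)). rw (eq_sym (tcr _ _ _)). rewrite (lam_inv_r C M), tid, idr. reflexivity.
Qed.

Lemma Vcoev (a k : C) :
  Vcomp M k (k ⊠ a) (a ⊠ k) ∘ sigma M _ _ ∘ (Coev' M a k ⊗ cs k a) ∘ rho_inv C M a = Coev M a k.
Proof.
  unfold Vcomp, Coev. rewrite !curry_nat. f_equal.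
  rw (eq_sym (tcl _ (sigma M _ _) (Coev' M a k ⊗ cs k a))). rewrite (sigma_nat C M), !tcl. norm.
  rw (alpha_nat C M _ _ _ _ _ _ _ _ _).
  rewrite (tsplit (cs k a) (Coev' M a k ⊗ idm k)). norm.
  rw (tswap (cs k a) (ev M _ _)).
  rw (eq_sym (tcr _ (ev M _ _) (Coev' M a k ⊗ idm k))).
  unfold Coev', cs. rewrite !(ev_curry C M).
  rw (lam_nat C M _ _ (sigma M a k)). rewrite (sigma_sigma C M), idl.
  rw (K1 a k). rw (eq_sym (tcl _ _ _)). rw (eq_sym (tcl _ _ _)).
  rewrite K4, (rho_inv_r C M), tid. reflexivity.
Qed.

Section Th.
Context (P : Arities M) (T : Theory P).
Local Notation hh a b := (vhom (th T) a b).
Local Notation vc a b c := (vcomp M (JO P) (th T) a b c).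
Local Notation "A ⊕ B" := (Jtens M P A B) (at level 30).
Local Notation tauT := (tau M P T).

Definition sw (X Y : JO P) : hom I (hh (X ⊕ Y) (Y ⊕ X)) :=
  tauT (X ⊕ Y) (Y ⊕ X) ∘ cs (JV M P Y) (JV M P X).

Lemma sw_inv (X Y : JO P) : pcomp (th T) (sw Y X) (sw X Y) = vid M _ (th T) (X ⊕ Y).
Proof.
  unfold pcomp, sw. rewrite tc. norm. rewrite <- (tau_comp M P T). unfold Jcomp. norm.
  cbn [JV Jtens proj1_sig].
  rw (Vswap (JV M P X) (JV M P Y)).
  exact (tau_id M P T (X ⊕ Y)).
Qed.

Lemma counit_rel (A K : JO P) :
  counit_l M P T A K = pre (th T) (sw A K) ∘ counit_r M P T A K.
Proof.
  unfold counit_l, counit_r, pre, sw. norm.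
  rw (ri_nat (tauT (K ⊕ A) K)). rw (ri_nat (Coev' M (JV M P A) (JV M P K))).
  rw (eq_sym (tsplit' (tauT (K ⊕ A) K) (tauT (A ⊕ K) (K ⊕ A) ∘ cs (JV M P K) (JV M P A)))).
  rw (eq_sym (tc (tauT (K ⊕ A) K) (Coev' M (JV M P A) (JV M P K)) (tauT (A ⊕ K) (K ⊕ A) ∘ cs (JV M P K) (JV M P A)) (idm I))).
  rewrite (idr (tauT (A ⊕ K) (K ⊕ A) ∘ cs _ _)).
  rewrite (tc (tauT (K ⊕ A) K) (Coev' M _ _) (tauT (A ⊕ K) (K ⊕ A)) (cs _ _)). norm.
  rw (eq_sym (tau_comp M P T (A ⊕ K) (K ⊕ A) K)). unfold Jcomp. norm. cbn [JV Jtens proj1_sig].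
  rw (Vcoev (JV M P A) (JV M P K)). reflexivity.
Qed.

Lemma counit_rel2 (A K : JO P) :
  counit_r M P T A K = pre (th T) (sw K A) ∘ counit_l M P T A K.
Proof.
  rewrite counit_rel. norm. rewrite (L4' (th T)), sw_inv, pre_id, idl. reflexivity.
Qed.

Definition FlOf (Fr : forall A K K' : JO P, hom (hh K K') (hh (K ⊕ A) (K' ⊕ A)))
  (A K K' : JO P) : hom (hh K K') (hh (A ⊕ K) (A ⊕ K')) :=
  post (th T) (sw K' A) ∘ pre (th T) (sw A K) ∘ Fr A K K'.
Definition FrOf (Fl : forall A K K' : JO P, hom (hh K K') (hh (A ⊕ K) (A ⊕ K')))
  (A K K' : JO P) : hom (hh K K') (hh (K ⊕ A) (K' ⊕ A)) :=
  post (th T) (sw A K') ∘ pre (th T) (sw K A) ∘ Fl A K K'.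

Lemma left_of_right Fr : is_right_action M P T Fr -> is_left_action M P T (FlOf Fr).
Proof.
  intros HR A K K'. unfold FlOf.
  rewrite (counit_rel A K).
  rewrite (tsplit (counit_l M P T A K') _), !tcr. norm.
  rw (eq_sym (tswap (counit_l M P T A K') (post (th T) (sw K' A)))).
  rw (eq_sym (L3 (th T) (sw K' A))).
  rw (eq_sym (tcl _ (pre (th T) (sw K' A)) (counit_l M P T A K'))).
  rewrite <- counit_rel2.
  rw (eq_sym (tswap (counit_r M P T A K') (pre (th T) (sw A K)))).
  rw (L2 (th T) (sw A K)).
  rw (eq_sym (tsplit (counit_r M P T A K') (Fr A K K'))).
  rw (L2 (th T) (sw A K)).
  rw (eq_sym (HR A K K')).
  reflexivity.
Qed.

Lemma right_of_left Fl : is_left_action M P T Fl -> is_right_action M P T (FrOf Fl).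
Proof.
  intros HL A K K'. unfold FrOf.
  rewrite (counit_rel2 A K).
  rewrite (tsplit (counit_r M P T A K') _), !tcr. norm.
  rw (eq_sym (tswap (counit_r M P T A K') (post (th T) (sw A K')))).
  rw (eq_sym (L3 (th T) (sw A K'))).
  rw (eq_sym (tcl _ (pre (th T) (sw A K')) (counit_r M P T A K'))).
  rewrite <- counit_rel.
  rw (eq_sym (tswap (counit_l M P T A K') (pre (th T) (sw K A)))).
  rw (L2 (th T) (sw K A)).
  rw (eq_sym (tsplit (counit_l M P T A K') (Fl A K K'))).
  rw (L2 (th T) (sw K A)).
  rw (eq_sym (HL A K K')).
  reflexivity.
Qed.

Lemma one_dir (V W : C) (J J' K K' : JO P)
    (mu : hom V (hh J J')) (nu : hom W (hh K K')) :
  commutes_with T mu nu -> commutes_with T nu mu.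
Proof.
  intros Hc Fl Fr HL HR.
  pose proof (Hc (FlOf Fr) (FrOf Fl) (left_of_right Fr HR) (right_of_left Fl HL)) as E.
  unfold kron1, kron2, FlOf, FrOf in *.
  repeat rewrite assoc in E.
  rewrite (rw2 (sigma_nat C M _ _ _ _ _ _)) in E. repeat rewrite assoc in E.
  rewrite (MID (th T) _ _ _ _ _ _ (sw_inv K J')) in E.
  rewrite (MID (th T) _ _ _ _ _ _ (sw_inv K' J)) in E.
  repeat rewrite assoc in E.
  apply (cancel_r (sigma M V W) (sigma M W V)); [apply sigma_sigma|].
  apply (cancel_l (post (th T) (sw K' J') ∘ pre (th T) (sw J K))
                  (post (th T) (sw J' K') ∘ pre (th T) (sw K J))).
  { apply conj_inv; apply sw_inv. }
  norm. rw (eq_sym (sigma_nat C M _ _ _ _ mu nu)).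
  rw (sigma_nat C M _ _ _ _ (Fr J K K') (Fl K' J J')).
  rw (sigma_sigma C M _ _). rewrite idr.
  rw (eq_sym (sigma_nat C M _ _ _ _ mu nu)).
  symmetry. exact E.
Qed.
End Th.
End Coh.

Theorem proposition5p8 (C : Cat) (M : SMCC C) (P : Arities M) (T : Theory P)
    (V W : C) (J J' K K' : JO P)
    (mu : hom V (vhom (th T) J J')) (nu : hom W (vhom (th T) K K')) :
  commutes_with T mu nu <-> commutes_with T nu mu.
Proof.
  split; apply one_dir.
Qed.
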